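(* Let $k$ be a field, $t\ge1$, $n_1,\dots,n_t\ge1$ and $a_1,\dots,a_t\ge1$ integers with $d=\sum_{s=1}^ta_s\ge2$. Let $K^{d(\mathbf a)}_{\mathbf n}$ be the $d(a_1,\dots,a_t)$-complete multipartite hypergraph. Then $R/I(K^{d(\mathbf a)}_{\mathbf n})$ has a linear resolution, and for $i\ge1$, $\beta_{i,j}(K^{d(\mathbf a)}_{\mathbf n})\ne0$ only if $j=i+(d-1)$.
   Context: $K^{d(\mathbf a)}_{\mathbf n}$ is the hypergraph on the disjoint union $B_1\sqcup\cdots\sqcup B_t$ ($|B_s|=n_s$) whose edges are all subsets $E$ with $|E\cap B_s|=a_s$ for every $s$. $R$ is the polynomial ring over $k$ with one variable per vertex; $I(\mathcal H)$ is generated by $\prod_{v\in E}x_v$, $E$ an edge; $\beta_{i,j}=\dim_k\mathrm{Tor}^R_i(R/I(\mathcal H),k)_j$. $R/I$ has a linear resolution if there is $c$ with $\beta_{i,j}=0$ for all $i\ge1$, $j\ne i+c-1$. *)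

(* Defs.v *)
From HB Require Import structures.
From mathcomp Require Import all_boot all_order all_algebra.
Set Implicit Arguments. Unset Strict Implicit. Unset Printing Implicit Defensive.
Import GRing.Theory.
Local Open Scope ring_scope.

(* Graded Betti numbers beta_{i,j} of R/I(H) for a squarefree monomial ideal
   I(H) = (x^E : E an edge of H) in R = k[x_v : v in V], computed as
   Tor_i^R(R/I,k)_j = H_i(K(x) (x) R/I)_j  (Koszul complex), multidegree by
   multidegree. *)

Section Koszul.
Variables (k : fieldType) (V : finType) (edges : {set {set V}}).

(* x^a lies in the monomial ideal generated by the x^E, E an edge,
   iff some generator x^E divides x^a. *)
Definition mono_in_ideal (a : V -> nat) : bool :=
  [exists E in edges, [forall v in E, (0 < a v)%N]].

Definition kshift (a : V -> nat) (F : {set V}) : V -> nat :=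
  fun v => (a v - (v \in F))%N.

(* basis of the multidegree-a, homological-degree-i part of K(x) (x) R/I:
   the elements m (x) e_F with |F| = i and m the standard monomial x^(a-e_F)
   (which must exist, i.e. a - e_F >= 0, and not lie in I). *)
Definition kbasis (a : V -> nat) (i : nat) (F : {set V}) : bool :=
  [&& #|F| == i, [forall v in F, (0 < a v)%N] & ~~ mono_in_ideal (kshift a F)].

(* Koszul sign of deleting v from F (V ordered by enum_rank) *)
Definition ksign (F : {set V}) (v : V) : k :=
  (-1) ^+ #|[set u in F | (enum_rank u < enum_rank v)%N]|.

Definition NS := #|{: {set V}}|.

(* matrix (row-vector convention) of the Koszul differential
   d_i : K_i(a) -> K_{i-1}(a),  e_F |-> sum_{v in F} sign * x_v e_{F \ v},
   on the space with coordinates indexed by all subsets of V (coordinates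
   outside the basis are identically zero). *)
Definition kdiff (a : V -> nat) (i : nat) : 'M[k]_(NS, NS) :=
  \matrix_(p, q)
    (let F := (enum_val p : {set V}) in let G := (enum_val q : {set V}) in
     if [&& kbasis a i F, kbasis a i.-1 G, G \subset F & #|F| == (#|G|.+1)%N]
     then \sum_(v in F :\: G) ksign F v else 0).

(* dim_k H_i of the multidegree-a strand = dim ker d_i - dim im d_{i+1} *)
Definition koszul_homdim (a : V -> nat) (i : nat) : nat :=
  (#|[set F | kbasis a i F]| - \rank (kdiff a i) - \rank (kdiff a i.+1))%N.

Definition betti (i j : nat) : nat :=
  (\sum_(al : {ffun V -> 'I_j.+1} | (\sum_v (al v : nat))%N == j)
     koszul_homdim (fun v => (al v : nat)) i)%N.

End Koszul.

Definition has_linear_resolution (b : nat -> nat -> nat) : Prop :=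
  exists c : nat, forall i j : nat, (1 <= i)%N -> j <> (i + c - 1)%N -> b i j = 0%N.

(* the d(a)-complete multipartite hypergraph K^{d(a)}_n on B_1 |_| ... |_| B_t,
   |B_s| = n_s: vertex set {s : 'I_t & 'I_(n s)}, block B_s = {x | tag x = s} *)
Definition cmh_vertex (t : nat) (n : 'I_t -> nat) : finType := {s : 'I_t & 'I_(n s)}.

Definition cmh_edges (t : nat) (n a : 'I_t -> nat) : {set {set cmh_vertex n}} :=
  [set E : {set cmh_vertex n} | [forall s : 'I_t, #|[set x in E | tag x == s]| == a s]].

(* Main.v *)
Require Import Defs.
From mathcomp Require Import all_boot all_order all_algebra.
From mathcomp Require Import zify.
Set Implicit Arguments. Unset Strict Implicit. Unset Printing Implicit Defensive.
Import GRing.Theory.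

Module RankPart.
Local Open Scope ring_scope.

Lemma rank_lb (F : fieldType) N (M : 'M[F]_(N,N)) (P : pred 'I_N)
  (f : 'I_N -> 'I_N) (lv : 'I_N -> nat) :
  (forall p, P p -> M p (f p) != 0) ->
  (forall p q, P p -> P q -> p != q -> M p (f q) != 0 -> (lv q < lv p)%N) ->
  (#|P| <= \rank M)%N.
Proof.
move=> Hd Ht.
pose e := fun r : 'I_#|P| => (enum_val r : 'I_N).
have eP r : P (e r) by exact: (enum_valP r).
have einj : injective e by exact: enum_val_inj.
pose B := rowsub e M.
have -> : #|P| = \rank B.
  apply/esym/eqP; rewrite -[_ == _]/(row_free B); apply: inj_row_free => u uB.
  apply/rowP => r0; rewrite mxE; apply/eqP/negPn/negP => ur0.
  have [r [ur rmax]] : exists r, u 0 r != 0 /\ forall r', u 0 r' != 0 -> (lv (e r') <= lv (e r))%N.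
    case: (@arg_maxnP _ r0 (fun r => u 0 r != 0) (fun r => lv (e r)) ur0) => r ur rmax.
    by exists r; split.
  have := congr1 (fun w : 'rV_N => w 0 (f (e r))) uB.
  rewrite /= !mxE (bigD1 r) //= big1 ?addr0.
    rewrite mxE; apply/eqP; by rewrite mulf_neq0 // Hd.
  move=> r' r'r; rewrite mxE.
  have [->|ur'] := eqVneq (u 0 r') 0; first by rewrite mul0r.
  have [E|Mne] := eqVneq (M (e r') (f (e r))) 0; first by rewrite E mulr0.
  have := Ht _ _ (eP r') (eP r) _ Mne.
  rewrite (inj_eq einj) r'r => /(_ isT); rewrite ltnNge rmax //.
by rewrite /B rowsubE mxrankM_maxr.
Qed.


Section Abstract.
Variables (k : fieldType) (V : finType) (edges : {set {set V}}) (m : V -> nat).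

Definition cell (F : {set V}) : bool :=
  [forall v in F, (0 < m v)%N] && ~~ mono_in_ideal edges (kshift m F).

Lemma kbasisE l F : kbasis edges m l F = (#|F| == l) && cell F.
Proof. by []. Qed.

Definition togl (F : {set V}) (v : V) := if v \in F then F :\ v else v |: F.

Lemma toglK F v : togl (togl F v) v = F.
Proof.
rewrite /togl; have [vF|vF] := boolP (v \in F).
  by rewrite !inE eqxx /= setD1K.
by rewrite setU11 setU1K.
Qed.

Lemma codim1 (F G : {set V}) : G \subset F -> #|F| = (#|G|.+1)%N ->
  exists2 u, u \in F & G = F :\ u.
Proof.
move=> GF cF.
have : (0 < #|F :\: G|)%N by rewrite cardsDS // cF subSnn.
case/card_gt0P => u; rewrite inE => /andP [uG uF].
exists u => //; apply/eqP; rewrite eqEcard; apply/andP; split.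
  apply/subsetP => x xG; rewrite !inE (subsetP GF) // andbT.
  by apply: contraNneq uG => <-.
by have := cardsD1 u F; rewrite uF cF add1n => -[<-].
Qed.

Variables (mt : {set V} -> option V) (lv : {set V} -> nat).
Hypothesis H2 : forall F v, cell F -> mt F = Some v ->
  cell (togl F v) /\ mt (togl F v) = Some v.
Hypothesis H3 : forall p q vp vq u, cell p -> cell q -> mt p = Some vp ->
  vp \in p -> mt q = Some vq -> vq \in q -> u \in p -> q :\ vq = p :\ u ->
  p != q -> (lv q < lv p)%N.

Definition dn F := if mt F is Some v then v \in F else false.
Definition up F := if mt F is Some v then v \notin F else false.
Definition partner F := if mt F is Some v then togl F v else F.

Lemma card_enum (Q : pred {set V}) :
  #|[pred p : 'I_(NS V) | Q (enum_val p)]| = #|[set F | Q F]|.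
Proof.
rewrite -(card_imset _ (@enum_val_inj _ [pred x | true])).
apply: eq_card => F; rewrite [RHS]inE; apply/imsetP/idP.
  by case=> p; rewrite inE => Qp ->.
by move=> QF; exists (enum_rank F); rewrite ?inE enum_rankK.
Qed.

Lemma rank_dn l : (1 <= l)%N ->
  (#|[set F | kbasis edges m l F && dn F]| <= \rank (kdiff k edges m l))%N.
Proof.
move=> l1.
rewrite -card_enum.
apply: (@rank_lb _ _ _ _ (fun p => enum_rank (partner (enum_val p)))
   (fun p => lv (enum_val p))).
- move=> p; rewrite /= => /andP [].
  set F := enum_val p; rewrite kbasisE /dn /partner => /andP [/eqP cF cellF].
  case E: (mt F) => [v|] // vF.
  have [ct _] := H2 cellF E.
  rewrite mxE enum_rankK /togl vF.
  have cD : #|F :\ v| = l.-1 by rewrite (cardsD1 v F) vF in cF; rewrite -cF.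
  move: ct; rewrite /togl vF => ct; rewrite -/F.
  rewrite kbasisE cF eqxx cellF /= kbasisE cD eqxx ct subD1set /=.
  rewrite prednK // eqxx.
  rewrite (eq_bigl (pred1 v)); last first.
    move=> x; rewrite !inE /=.
    by case: (x =P v) => [->|]; rewrite ?vF //=; case: (x \in F).
  by rewrite big_pred1_eq /ksign signr_eq0.
- move=> p q; rewrite /= => /andP [] + dp /andP [] +.
  rewrite !kbasisE => /andP [/eqP cp cellp] /andP [/eqP cq cellq] dq pq.
  move: dp dq; rewrite /dn.
  case Ep: (mt (enum_val p)) => [vp|] // vpp.
  case Eq: (mt (enum_val q)) => [vq|] // vqq.
  rewrite mxE enum_rankK /partner Eq /togl vqq.
  case: ifP => [/and4P [_ _ sub ce] _|]; last by rewrite eqxx.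
  have [u up' equ] := codim1 sub (eqP ce).
  apply: (H3 cellp cellq Ep vpp Eq vqq up' equ).
  by rewrite (inj_eq (@enum_val_inj _ _)).
Qed.


Lemma partnerK F : cell F -> partner (partner F) = F.
Proof.
move=> cF; rewrite /partner; case E: (mt F) => [v|] /=; last by rewrite E.
have [_ Et] := H2 cF E.
by rewrite Et toglK.
Qed.

Lemma homdim0 i : (1 <= i)%N ->
  (forall F, cell F -> #|F| = i -> mt F != None) ->
  koszul_homdim k edges m i = 0%N.
Proof.
move=> i1 H1.
apply/eqP; rewrite /koszul_homdim !subn_eq0 leq_subLR.
set A := [set F | kbasis edges m i F].
have -> : #|A| = (#|[set F | kbasis edges m i F && dn F]| +
                  #|[set F | kbasis edges m i.+1 F && dn F]|)%N.
  rewrite -(cardsID [set F | dn F] A); congr (_ + _)%N.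
    by apply: eq_card => F; rewrite !inE.
  rewrite -(card_in_imset (f := partner)); last first.
    move=> F1 F2; rewrite !inE => /andP [_ +] /andP [_ +].
    rewrite !kbasisE => /andP [_ c1] /andP [_ c2] e.
    by rewrite -(partnerK c1) e partnerK.
  apply: eq_card => G; rewrite [in RHS]inE; apply/imsetP/idP.
    case=> F; rewrite !inE => /andP [nd] /[dup] kF; rewrite kbasisE => /andP [/eqP cF cellF] ->.
    have := H1 F cellF cF; rewrite /dn in nd; rewrite /partner.
    case E: (mt F) => [v|] // _; rewrite E in nd.
    have [ct Et] := H2 cellF E.
    move: ct Et; rewrite /togl (negbTE nd) => ct Et.
    rewrite kbasisE ct andbT /dn Et setU11 andbT.
    by rewrite cardsU1 nd cF.
  move=> /andP [] /[dup] kG; rewrite kbasisE => /andP [/eqP cG cellG].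
  rewrite /dn; case E: (mt G) => [v|] // vG.
  have [ct Et] := H2 cellG E.
  move: ct Et; rewrite /togl vG => ct Et.
  exists (G :\ v); last by rewrite /partner Et /togl setD11 setD1K.
  rewrite !inE kbasisE ct andbT /dn Et setD11 /=.
  by move: cG; rewrite (cardsD1 v G) vG add1n => -[->].
by apply: leq_add; apply: rank_dn.
Qed.

End Abstract.

Lemma cone_homdim (k : fieldType) (V : finType) (edges : {set {set V}}) m w i :
  (1 <= i)%N -> (forall F, cell edges m (togl F w) = cell edges m F) ->
  koszul_homdim k edges m i = 0%N.
Proof.
move=> i1 Hc.
apply: (@homdim0 k V edges m (fun _ => Some w) (fun _ => 0%N)) => //.
- by move=> F v cF [<-]; rewrite Hc.
- move=> p q vp vq u cp cq [<-] wp [<-] wq up e.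
  have wu : w = u.
    apply/eqP; apply: contraT => wu.
    have : w \in p :\ u by rewrite !inE wp andbT.
    by rewrite -e !inE eqxx.
  move: e; rewrite -wu => e.
  by rewrite -(setD1K wp) -(setD1K wq) e eqxx.
Qed.

Lemma nocell_homdim (k : fieldType) (V : finType) (edges : {set {set V}}) m i :
  (1 <= i)%N -> (forall F, cell edges m F -> #|F| != i) ->
  koszul_homdim k edges m i = 0%N.
Proof.
move=> i1 Hc.
apply: (@homdim0 k V edges m (fun _ => None) (fun _ => 0%N)) => //.
by move=> F cF cFi; have := Hc F cF; rewrite cFi eqxx.
Qed.

Lemma in_togl (V : finType) (F : {set V}) w x : x != w -> (x \in togl F w) = (x \in F).
Proof. by move=> xw; rewrite /togl; case: ifP; rewrite !inE (negbTE xw). Qed.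

Lemma caseA_cell (V : finType) (edges : {set {set V}}) m w :
  (2 <= m w)%N -> forall F, cell edges m (togl F w) = cell edges m F.
Proof.
move=> mw F; rewrite /cell; congr (_ && ~~ _).
  apply/forall_inP/forall_inP => H x xF; have [->|xw] := eqVneq x w.
  - by apply: leq_trans mw.
  - by apply: H; rewrite in_togl.
  - by apply: leq_trans mw.
  - by apply: H; move: xF; rewrite in_togl.
rewrite /mono_in_ideal; apply: eq_existsb => E; congr (_ && _).
apply: eq_forallb => x; congr (_ ==> _).
rewrite /kshift; have [->|xw] := eqVneq x w; last by rewrite in_togl.
have h b : (0 < m w - nat_of_bool b)%N by case: b => /=; [rewrite subn_gt0 | rewrite subn0]; exact: leq_trans _ mw.
by rewrite !h.
Qed.

End RankPart.
Import RankPart.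

Section Hyp.
Variables (t : nat) (n a : 'I_t -> nat).
Local Notation V := (cmh_vertex n).

Definition blk (X : {set V}) (s : 'I_t) := [set x in X | tag x == s].

Lemma edge_inP (U : {set V}) :
  [exists E in cmh_edges n a, E \subset U] = [forall s, a s <= #|blk U s|].
Proof.
apply/existsP/forallP.
  case=> E /andP [EE EU] s; move: EE; rewrite inE => /forallP /(_ s) /eqP <-.
  apply: subset_leq_card; apply/subsetP => x; rewrite !inE => /andP [xE ->].
  by rewrite (subsetP EU).
move=> H.
pose E := [set x : V | x \in take (a (tag x)) (enum (blk U (tag x)))].
have blkE s : blk E s = [set x in take (a s) (enum (blk U s))].
  apply/setP => x; rewrite !inE; apply/andP/idP.
    by case=> xin /eqP <-.
  move=> xin; have := mem_take xin; rewrite mem_enum !inE => /andP [_ /eqP ts].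
  by rewrite ts; split.
exists E; apply/andP; split.
  rewrite inE; apply/forallP => s; rewrite -/(blk E s) blkE cardsE.
  rewrite (card_uniqP _) ?take_uniq ?enum_uniq // size_takel //.
  by rewrite -cardE.
apply/subsetP => x; rewrite inE => /mem_take; rewrite mem_enum !inE.
by case/andP.
Qed.

Lemma card_blk (X : {set V}) : #|X| = \sum_(s < t) #|blk X s|.
Proof.
rewrite -sum1_card (partition_big (fun x : V => tag x) xpredT) //.
apply: eq_bigr => s _; rewrite -sum1_card; apply: eq_bigl => x.
by rewrite !inE.
Qed.

Variable (m : V -> nat).
Hypothesis hm : forall v, m v <= 1.
Definition W := [set v | 0 < m v].

Lemma cell01 F : cell (cmh_edges n a) m F =
  (F \subset W) && ~~ [forall s, a s <= #|blk (W :\: F) s|].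
Proof.
rewrite /cell; congr (_ && ~~ _).
  by apply/forall_inP/subsetP => H x /H; rewrite inE.
rewrite /mono_in_ideal -edge_inP; apply: eq_existsb => E; congr (_ && _).
have ptw x : (0 < kshift m F x) = (x \in W :\: F).
  rewrite /kshift !inE; have := hm x.
  by case: (x \in F); case: (m x) => [|[|]].
by apply/forall_inP/subsetP => H x /H; rewrite ptw.
Qed.

Lemma caseB1 (k : fieldType) i : (1 <= i)%N -> (exists s, #|blk W s| < a s) ->
  koszul_homdim k (cmh_edges n a) m i = 0%N.
Proof.
move=> i1 [s0 hs0].
have cE F : cell (cmh_edges n a) m F = (F \subset W).
  rewrite cell01; case: (F \subset W) => //=; apply/negP => /forallP /(_ s0).
  apply/negP; rewrite -ltnNge; apply: leq_ltn_trans hs0.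
  by apply: subset_leq_card; apply/subsetP => x; rewrite !inE => /andP [/andP [_ ->] ->].
have [W0|[w wW]] := set_0Vmem W.
  apply: nocell_homdim => // F; rewrite cE W0 subset0 => /eqP ->.
  by rewrite cards0 eq_sym -lt0n.
apply: (@cone_homdim _ _ _ _ w) => // F; rewrite !cE /togl.
case: ifP => wF.
  apply/idP/idP => H.
    by rewrite -(setD1K wF) subUset sub1set wW.
  by apply: subset_trans H; apply: subD1set.
by rewrite subUset sub1set wW.
Qed.

Section B2.
Hypothesis hW : forall s, a s <= #|blk W s|.
Variable s0 : 'I_t.
Hypothesis hs0 : val s0 = 0.
Variable vv : 'I_t -> V.
Hypothesis hv : forall s, vv s \in blk W s.

Definition c s := #|blk W s| - a s.
Definition cl (F : {set V}) := (F \subset W) && [exists s, c s < #|blk F s|].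

Lemma blk_sub (F : {set V}) s : F \subset W -> blk F s \subset blk W s.
Proof.
move=> FW; apply/subsetP => x; rewrite /blk !inE => /andP [xF ->].
by have := subsetP FW x xF; rewrite inE => ->.
Qed.

Lemma cellE (F : {set V}) : cell (cmh_edges n a) m F = cl F.
Proof.
rewrite cell01 /cl; case FW: (F \subset W) => //=.
rewrite negb_forall; apply: eq_existsb => s.
have -> : blk (W :\: F) s = blk W s :\: blk F s.
  by apply/setP => x; rewrite !inE; case: (x \in F); case: (tag x == s); case: (0 < m x).
rewrite cardsDS ?blk_sub // -ltnNge /c.
have := hW s; have := subset_leq_card (blk_sub s FW).
move: (#|blk W s|) (#|blk F s|) (a s) => x y z h1 h2.
by apply/idP/idP => h; lia.
Qed.

Lemma tag_vv s : tag (vv s) = s.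
Proof. by have := hv s; rewrite !inE => /andP [_ /eqP]. Qed.

Lemma vvW s : vv s \in W.
Proof. by have := hv s; rewrite /blk inE => /andP []. Qed.

Lemma vv_inj : injective vv.
Proof. by move=> s1 s2 e; rewrite -(tag_vv s1) e tag_vv. Qed.

Lemma blk_togl_ne (F : {set V}) j s : s != j -> blk (togl F (vv j)) s = blk F s.
Proof.
move=> sj; apply/setP => x; rewrite !inE.
have [xv|xv] := eqVneq x (vv j).
  by rewrite xv tag_vv eq_sym (negbTE sj) !andbF.
by rewrite in_togl.
Qed.

Lemma card_blk_D (F : {set V}) j : vv j \in F -> #|blk (F :\ vv j) j| = #|blk F j| - 1.
Proof.
move=> vF; have -> : blk (F :\ vv j) j = blk F j :\ vv j.
  by apply/setP => x; rewrite !inE andbA.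
by rewrite (cardsD1 (vv j) (blk F j)) !inE vF tag_vv eqxx /= add1n subn1.
Qed.

Lemma card_blk_U (F : {set V}) j : vv j \notin F -> #|blk (vv j |: F) j| = #|blk F j| + 1.
Proof.
move=> vF; have -> : blk (vv j |: F) j = vv j |: blk F j.
  apply/setP => x; rewrite !inE; have [->|xv] := eqVneq x (vv j).
    by rewrite tag_vv !eqxx.
  by [].
by rewrite cardsU1 !inE (negbTE vF) addnC.
Qed.

Local Notation v0 := (vv s0).

Lemma tag_ne j x : tag x != j -> x != vv j.
Proof. by apply: contraNneq => ->; rewrite tag_vv. Qed.

Lemma vv_ne s j : s != j -> vv s != vv j.
Proof. by move=> sj; apply: tag_ne; rewrite tag_vv. Qed.

Lemma R0 (F : {set V}) : cl F -> ~~ cl (togl F v0) ->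
  [/\ v0 \in F, F \subset W, #|blk F s0| = (c s0).+1 &
      forall s, s != s0 -> #|blk F s| <= c s].
Proof.
case/andP => FW /existsP [s1 hs1] ncl.
have v0F : v0 \in F.
  apply: contraNT ncl => v0F; rewrite /togl (negbTE v0F) /cl subUset sub1set vvW FW /=.
  apply/existsP; exists s1; apply: (leq_trans hs1); apply: subset_leq_card.
  by apply/subsetP => x; rewrite !inE => /andP [-> ->]; rewrite orbT.
move: ncl; rewrite /togl v0F /cl (subset_trans (subD1set _ _) FW) /= negb_exists.
move=> /forallP H.
have Hs s : s != s0 -> #|blk F s| <= c s.
  move=> ss0; have := H s; rewrite -(blk_togl_ne F ss0) /togl v0F.
  by rewrite ltnNge negbK.
have s10 : s1 = s0.
  apply/eqP; apply: contraT => ss; have := Hs _ ss; by rewrite leqNgt hs1.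
subst s1; split => //.
have := H s0; rewrite card_blk_D // -leqNgt.
have : 0 < #|blk F s0| by apply/card_gt0P; exists v0; rewrite !inE v0F tag_vv eqxx.
by move: (#|blk F s0|) hs1 => x; lia.
Qed.
Lemma R0' (F : {set V}) : v0 \in F -> F \subset W -> #|blk F s0| = (c s0).+1 ->
  (forall s, s != s0 -> #|blk F s| <= c s) -> cl F && ~~ cl (togl F v0).
Proof.
move=> v0F FW h0 hs; apply/andP; split.
  by rewrite /cl FW; apply/existsP; exists s0; rewrite h0.
rewrite /cl negb_and negb_exists; apply/orP; right; apply/forallP => s.
rewrite -leqNgt; have [->|ss0] := eqVneq s s0.
  by rewrite /togl v0F card_blk_D // h0 subn1.
by rewrite blk_togl_ne // hs.
Qed.

Definition P j (F : {set V}) := (vv j \in F) || (#|blk F j| < c j).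
Definition first (F : {set V}) j := [&& 0 < val j, P j F &
  [forall s : 'I_t, ((0 < val s) && (val s < val j)) ==> ~~ P s F]].

Lemma first_uniq (F : {set V}) j j' : first F j -> first F j' -> j = j'.
Proof.
case/and3P => j0 Pj /forallP Hj; case/and3P => j'0 Pj' /forallP Hj'.
apply: val_inj; case: (ltngtP (val j) (val j')) => // h.
  by have := Hj' j; rewrite j0 h Pj.
by have := Hj j'; rewrite j'0 h Pj'.
Qed.

Lemma exists_first (F : {set V}) j : 0 < val j -> P j F -> exists j', first F j'.
Proof.
move=> j0 Pj.
case: (@arg_minnP _ j (fun j => (0 < val j) && P j F) (fun j => val j)); first by rewrite j0.
move=> j' /andP [j'0 Pj'] Hmin; exists j'; rewrite /first j'0 Pj' /=.
apply/forallP => s; apply/implyP => /andP [s0' slt]; apply/negP => Ps.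
by have := Hmin s; rewrite s0' Ps => /(_ isT); rewrite leqNgt slt.
Qed.

Lemma pick_first (F : {set V}) j : first F j -> [pick j' | first F j'] = Some j.
Proof.
move=> fj; case: pickP => [j' fj'|H]; first by rewrite (first_uniq fj' fj).
by have := H j; rewrite fj.
Qed.

Definition mt (F : {set V}) := if cl (togl F v0) then Some v0
  else if [pick j | first F j] is Some j then Some (vv j) else None.
Definition lv (F : {set V}) := if cl (togl F v0) then t
  else if [pick j | first F j] is Some j then val j else 0.

Lemma j_ne_s0 j : 0 < val j -> j != s0.
Proof. by move=> j0; apply: contraTneq j0 => ->; rewrite hs0. Qed.

Lemma stage_inv (F : {set V}) j : cl F -> ~~ cl (togl F v0) -> first F j ->
  [/\ cl (togl F (vv j)), ~~ cl (togl (togl F (vv j)) v0) & first (togl F (vv j)) j].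
Proof.
move=> clF ncl fj; have [v0F FW h0 hs] := R0 clF ncl.
case/and3P: (fj) => j0 Pj /forallP Hj.
have js0 := j_ne_s0 j0.
set F' := togl F (vv j).
have v0F' : v0 \in F' by rewrite in_togl // vv_ne // eq_sym.
have F'W : F' \subset W.
  rewrite /F' /togl; case: ifP => _; last by rewrite subUset sub1set vvW.
  exact: subset_trans (subD1set _ _) FW.
have cj : #|blk F' j| <= c j /\ (vv j \in F' \/ #|blk F' j| < c j).
  rewrite /F' /togl; case: ifP => vF.
    rewrite card_blk_D //; have := hs j js0.
    have : 0 < #|blk F j| by apply/card_gt0P; exists (vv j); rewrite !inE vF tag_vv eqxx.
    move: (#|blk F j|) => x h1 h2; split.
      exact: leq_trans (leq_subr 1 x) h2.
    by right; rewrite subn1 prednK.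
  rewrite card_blk_U ?vF //; move: Pj; rewrite /P vF /= => h; split; first by rewrite addn1.
  by left; rewrite setU11.
have [clF' ncl'] : cl F' /\ ~~ cl (togl F' v0).
  apply/andP; apply: R0' => //.
    by rewrite /F' blk_togl_ne // eq_sym.
  move=> s ss0; have [->|sj] := eqVneq s j; first by case: cj.
  by rewrite /F' blk_togl_ne // hs.
split => //; rewrite /first j0 /=; apply/andP; split.
  by rewrite /P; case: cj => _ [->|->] //; rewrite orbT.
apply/forallP => s; apply/implyP => /andP [s0' slt].
have sj : s != j by apply: contraTneq slt => ->; rewrite ltnn.
have := Hj s; rewrite s0' slt /= /P /F' blk_togl_ne // in_togl //.
exact: vv_ne.
Qed.
Lemma mt_spec (F : {set V}) x : mt F = Some x ->
  (cl (togl F v0) /\ x = v0 /\ lv F = t) \/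
  (~~ cl (togl F v0) /\ exists j, [/\ first F j, x = vv j & lv F = val j]).
Proof.
rewrite /mt /lv; case: ifP => ncl; first by case=> <-; left.
case: pickP => // j fj [<-]; right; split => //; by exists j.
Qed.

Lemma H2B (F : {set V}) x : cl F -> mt F = Some x ->
  cl (togl F x) /\ mt (togl F x) = Some x.
Proof.
move=> clF /mt_spec [[cl0 [-> _]]|[ncl [j [fj -> _]]]].
  by split => //; rewrite /mt toglK clF.
have [clF' ncl' fj'] := stage_inv clF ncl fj.
by split => //; rewrite /mt (negbTE ncl') (pick_first fj').
Qed.

Lemma H3B (p q : {set V}) vp vq u : cl p -> cl q -> mt p = Some vp ->
  vp \in p -> mt q = Some vq -> vq \in q -> u \in p -> q :\ vq = p :\ u ->
  p != q -> lv q < lv p.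
Proof.
move=> clp clq mp vpp mq vqq up e pq.
have vqp : vq \notin p.
  apply/negP => vqp; have vqu : vq = u.
    apply/eqP; apply: contraT => ne.
    have : vq \in p :\ u by rewrite !inE ne vqp.
    by rewrite -e !inE eqxx.
  move: e; rewrite -vqu => e; move/negP: pq; apply.
  by rewrite -(setD1K vpp) -(setD1K vqp) -(setD1K vqq) e setD1K // setD1K.
have v0p : v0 \in p.
  case: (mt_spec mp) => [[_ [<- _]]|[ncl _]] //.
  by case: (R0 clp ncl).
case: (mt_spec mq) => [[_ [eq _]]|[nclq [s [fs eq lvq]]]].
  by move: vqp; rewrite eq v0p.
case: (mt_spec mp) => [[_ [_ ->]]|[nclp [r [fr eqp lvp]]]].
  by rewrite lvq ltn_ord.
rewrite lvq lvp ltnNge; apply/negP => rs.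
case: (ltngtP (val r) (val s)) => [rs'|rs'|rs'].
- case/and3P: (fs) => _ _ /forallP /(_ r); rewrite rs' andbT.
  case/and3P: (fr) => r0 _ _; rewrite r0 /= /P negb_or => /andP [vrq _].
  have vru : vv r = u.
    apply/eqP; apply: contraT => ne.
    have : vv r \in p :\ u by rewrite !inE ne -eqp vpp.
    by rewrite -e !inE => /andP [_]; rewrite (negbTE vrq).
  have [_ _ f1] := stage_inv clp nclp fr.
  have [_ _ f2] := stage_inv clq nclq fs.
  move: f1 f2; rewrite /togl -eqp vpp -eq vqq eqp vru -e => f1 f2.
  by move: rs'; rewrite (first_uniq f1 f2) ltnn.
- by move: rs; rewrite leqNgt rs'.
- have rs2 : r = s by apply: val_inj.
  by move: vqp; rewrite eq -rs2 -eqp vpp.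
Qed.

Lemma sum_c : \sum_s c s + \sum_s a s = #|W|.
Proof.
rewrite -big_split (card_blk W); apply: eq_bigr => s _.
by rewrite /c /= subnK.
Qed.

Lemma H1B (F : {set V}) : cl F -> mt F = None -> #|F| = (\sum_s c s).+1.
Proof.
rewrite /mt => clF; case: ifP => // ncl; case: pickP => // H _.
have [v0F FW h0 hs] := R0 clF (negbT ncl).
have eqs s : s != s0 -> #|blk F s| = c s.
  move=> ss0; apply/eqP; rewrite eqn_leq hs //=.
  have s0' : 0 < val s by rewrite lt0n; apply: contra ss0 => /eqP e; apply/eqP/val_inj; rewrite e hs0.
  have : ~~ P s F.
    apply/negP => Ps; have [j fj] := exists_first s0' Ps.
    by have := H j; rewrite fj.
  by rewrite /P negb_or -leqNgt => /andP [_].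
rewrite card_blk (bigD1 s0) //= h0 [in RHS](bigD1 s0) //= addSn; congr (_ + _).+1.
by apply: eq_bigr => s ss0; rewrite eqs.
Qed.

Lemma caseB2 (k : fieldType) i : 1 <= i -> 1 <= \sum_s a s ->
  #|W| != i + \sum_s a s - 1 -> koszul_homdim k (cmh_edges n a) m i = 0%N.
Proof.
move=> i1 d1 hi.
apply: (@homdim0 k V (cmh_edges n a) m mt lv) => //.
- by move=> F x; rewrite !cellE; apply: H2B.
- by move=> p q vp vq u; rewrite !cellE; apply: H3B.
- move=> F; rewrite cellE => clF cF; apply/negP => /eqP mN.
  have := H1B clF mN; rewrite cF => ei; move: hi; rewrite -sum_c ei.
  by move: (\sum_s c s) (\sum_s a s) d1 => x y hy /eqP; lia.
Qed.
End B2.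

End Hyp.


Lemma hom0 (k : fieldType) (t : nat) (n a : 'I_t -> nat) (ht : 0 < t)
  (ha : forall s, 1 <= a s) (m : cmh_vertex n -> nat) i :
  1 <= i -> \sum_v m v != i + \sum_(s < t) a s - 1 ->
  koszul_homdim k (cmh_edges n a) m i = 0%N.
Proof.
move=> i1 hi.
case: (boolP [exists w, 1 < m w]) => [/existsP [w mw]|].
  by apply: (@cone_homdim _ _ _ _ w) => //; apply: caseA_cell.
rewrite negb_exists => /forallP hm'.
have hm v : m v <= 1 by have := hm' v; rewrite -leqNgt.
case: (boolP [exists s, #|blk (W m) s| < a s]) => [/existsP hs|].
  by apply: caseB1.
rewrite negb_exists => /forallP hW'.
have hW s : a s <= #|blk (W m) s| by have := hW' s; rewrite -leqNgt.
pose s0 : 'I_t := Ordinal ht.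
have [vv hv] : exists vv : 'I_t -> cmh_vertex n, forall s, vv s \in blk (W m) s.
  apply: (@fin_all_exists _ (fun _ => cmh_vertex n) (fun s x => x \in blk (W m) s)) => s.
  apply/card_gt0P.
  exact: leq_trans (ha s) (hW s).
have d1 : 1 <= \sum_(s < t) a s.
  by rewrite (bigD1 s0) //= (leq_trans (ha s0)) ?leq_addr.
apply: (@caseB2 _ _ _ _ hm hW s0 _ vv hv) => //.
have <- : \sum_v m v = #|W m|.
  rewrite -sum1_card [RHS]big_mkcond /=; apply: eq_bigr => v _.
  by rewrite inE; have := hm v; case: (m v) => [|[|]].
exact: hi.
Qed.

Theorem lemma3p15 (k : fieldType) (t : nat) (n a : 'I_t -> nat) :
  (1 <= t)%N ->
  (forall s, 1 <= n s)%N ->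
  (forall s, 1 <= a s)%N ->
  (2 <= \sum_(s < t) a s)%N ->
  has_linear_resolution (betti k (cmh_edges n a)) /\
  (forall i j : nat, (1 <= i)%N -> betti k (cmh_edges n a) i j <> 0%N ->
     j = (i + ((\sum_(s < t) a s) - 1))%N).
Proof.
move=> ht hn ha hd.
have B0 i j : 1 <= i -> j <> i + \sum_(s < t) a s - 1 -> betti k (cmh_edges n a) i j = 0%N.
  move=> i1 hj; rewrite /betti big1 // => al /eqP hs.
  apply: hom0 => //; rewrite hs; exact/eqP.
split.
  by exists (\sum_(s < t) a s) => i j i1 hj; apply: B0.
move=> i j i1 hb; apply/eqP; apply: contraT => /eqP hj; exfalso; apply: hb.
apply: B0 => // e; apply: hj; rewrite e; lia.
Qed.
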